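(* Let $L$ be a unimodular lattice, $c\colon L\to L$ an involution, and $v\in L_-(c)$ with $v^2=-2$; put $c_v=c\circ s_v$. Then (1) if $v$ is odd, then $d(c_v)=d(c)+1$; (2) if $v$ is even, then $d(c_v)=d(c)-1$; (3) $v$ is a Wu element with respect to $c$ if and only if $c_v$ is an even involution. In particular, if $c_v$ is even, then $d(c_v)=d(c)-1$.
   Context: A lattice is a finite rank free abelian group with an integral symmetric bilinear form $\langle x,y\rangle$, $x^2=\langle x,x\rangle$. Standing assumption: if $L$ is odd, it has a characteristic element (an element $w$ with $x^2\equiv\langle w,x\rangle \bmod 2$ for all $x$) lying in $L_+(c)$ or in $L_-(c)$. $L_\pm(c)=\operatorname{Ker}(1\mp c)$; their discriminant groups are $2$-periodic and isomorphic to $L/(L_++L_-)$; $d(c)$ is the rank of this $2$-periodic group. For $v^2=-2$, $s_v(x)=x+\langle x,v\rangle v$ (it commutes with $c$ since $v\in L_-$). An element $h\in L_-(c)$ is even if $\langle h,l\rangle$ is even for all $l\in L_-(c)$, odd otherwise; an even $h\in L_-(c)$ is a Wu element if $x^2+\langle x,cx\rangle\equiv\langle x,h\rangle \bmod 2$ for all $x\in L$ (equivalently, $\tfrac12 h$ represents the characteristic element of the discriminant bilinear form of $L_-$). An involution $c$ is even if $\langle x,cx\rangle+x^2$ is even for all $x\in L$. *)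

(* Defs.v *)
From HB Require Import structures.
From mathcomp Require Import all_boot all_order all_algebra.
From mathcomp Require Import finmap boolp classical_sets cardinality.
Set Implicit Arguments. Unset Strict Implicit. Unset Printing Implicit Defensive.
Import Order.TTheory GRing.Theory Num.Theory.
Local Open Scope ring_scope.

(* A lattice of rank n is Z^n = 'rV[int]_n with Gram matrix G : 'M[int]_n;
   <x,y> = x G y^T.  An endomorphism given by a matrix C acts on row vectors
   by x |-> x *m C. *)

Definition lat_form (n : nat) (G : 'M[int]_n) (x y : 'rV[int]_n) : int :=
  (x *m G *m y^T) 0 0.

Definition lat_symmetric_gram (n : nat) (G : 'M[int]_n) : Prop := G^T = G.

Definition lat_unimodular (n : nat) (G : 'M[int]_n) : Prop :=
  \det G = 1 \/ \det G = -1.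

Definition lat_odd_lattice (n : nat) (G : 'M[int]_n) : Prop :=
  exists x : 'rV[int]_n, ~~ (2 %| lat_form G x x)%Z.

Definition lat_characteristic (n : nat) (G : 'M[int]_n) (w : 'rV[int]_n) : Prop :=
  forall x : 'rV[int]_n, (2 %| lat_form G x x - lat_form G w x)%Z.

Definition lat_isometry (n : nat) (G C : 'M[int]_n) : Prop :=
  forall x y : 'rV[int]_n, lat_form G (x *m C) (y *m C) = lat_form G x y.

Definition lat_involution (n : nat) (G C : 'M[int]_n) : Prop :=
  lat_isometry G C /\ C *m C = 1%:M.

Definition Lplus (n : nat) (C : 'M[int]_n) (x : 'rV[int]_n) : Prop := x *m C = x.
Definition Lminus (n : nat) (C : 'M[int]_n) (x : 'rV[int]_n) : Prop := x *m C = - x.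

Definition in_Lpm (n : nat) (C : 'M[int]_n) (x : 'rV[int]_n) : Prop :=
  exists a b, Lplus C a /\ Lminus C b /\ x = a + b.

Local Open Scope classical_set_scope.

Definition cosets_Lpm (n : nat) (C : 'M[int]_n) : set (set 'rV[int]_n) :=
  [set [set y | in_Lpm C (x - y)] | x in [set: 'rV[int]_n]].

Local Close Scope classical_set_scope.

(* d(c) = rank of the 2-periodic group L/(L_+ + L_-), i.e. log_2 of its order *)
Definition lat_dc (n : nat) (C : 'M[int]_n) : nat :=
  logn 2 (#|` fset_set (cosets_Lpm C)|)%fset.

(* the reflection s_v(x) = x + <x,v> v, as a matrix acting on rows *)
Definition lat_refl (n : nat) (G : 'M[int]_n) (v : 'rV[int]_n) : 'M[int]_n :=
  1%:M + (G *m v^T) *m v.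

(* c_v = c o s_v : x |-> c (s_v x) = x *m lat_refl *m C *)
Definition lat_cv (n : nat) (G C : 'M[int]_n) (v : 'rV[int]_n) : 'M[int]_n :=
  lat_refl G v *m C.

Definition lat_odd_elt (n : nat) (G C : 'M[int]_n) (h : 'rV[int]_n) : Prop :=
  exists l, Lminus C l /\ ~~ (2 %| lat_form G h l)%Z.
Definition lat_even_elt (n : nat) (G C : 'M[int]_n) (h : 'rV[int]_n) : Prop :=
  forall l, Lminus C l -> (2 %| lat_form G h l)%Z.

Definition lat_wu_element (n : nat) (G C : 'M[int]_n) (h : 'rV[int]_n) : Prop :=
  Lminus C h /\ lat_even_elt G C h /\
  forall x, (2 %| lat_form G x x + lat_form G x (x *m C) - lat_form G x h)%Z.

Definition lat_even_involution (n : nat) (G C : 'M[int]_n) : Prop :=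
  forall x, (2 %| lat_form G x (x *m C) + lat_form G x x)%Z.

(* Main.v *)
Require Import Defs.
From HB Require Import structures.
From mathcomp Require Import all_boot all_order all_algebra.
From mathcomp Require Import finmap boolp classical_sets cardinality.
From mathcomp Require Import zify ring.
Import Order.TTheory GRing.Theory Num.Theory.
Local Open Scope ring_scope.
Set Implicit Arguments. Unset Strict Implicit. Unset Printing Implicit Defensive.

Section Form.
Variable n : nat.
Variable G : 'M[int]_n.
Hypothesis HS : lat_symmetric_gram G.
Local Notation "<< x , y >>" := (lat_form G x y).

Lemma formDl x y z : << x + y, z >> = << x, z >> + << y, z >>.
Proof. by rewrite /lat_form !mulmxDl mxE. Qed.
Lemma formDr x y z : << z, x + y >> = << z, x >> + << z, y >>.
Proof. by rewrite /lat_form linearD /= mulmxDr mxE. Qed.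
Lemma formZl (k : int) x z : << k *: x, z >> = k * << x, z >>.
Proof. by rewrite /lat_form -!scalemxAl mxE. Qed.
Lemma formZr (k : int) x z : << z, k *: x >> = k * << z, x >>.
Proof. by rewrite /lat_form linearZ /= -scalemxAr mxE. Qed.
Lemma formNl x z : << - x, z >> = - << x, z >>.
Proof. by rewrite -scaleN1r formZl mulN1r. Qed.
Lemma formNr x z : << z, - x >> = - << z, x >>.
Proof. by rewrite -scaleN1r formZr mulN1r. Qed.
Lemma formBl x y z : << x - y, z >> = << x, z >> - << y, z >>.
Proof. by rewrite formDl formNl. Qed.
Lemma formBr x y z : << z, x - y >> = << z, x >> - << z, y >>.
Proof. by rewrite formDr formNr. Qed.
Lemma form0l z : << 0, z >> = 0.
Proof. by rewrite /lat_form !mul0mx mxE. Qed.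
Lemma formC x y : << x, y >> = << y, x >>.
Proof.
rewrite /lat_form.
rewrite -[LHS]/((x *m G *m y^T) 0 0) -[in LHS](trmxK (x *m G *m y^T)).
rewrite [in LHS]mxE.
by rewrite !trmx_mul trmxK HS mulmxA.
Qed.
Lemma form_entry (A : 'M[int]_n) i j :
  ((delta_mx 0 i : 'rV[int]_n) *m A *m (delta_mx 0 j : 'rV[int]_n)^T) 0 0 = A i j.
Proof.
rewrite trmx_delta -rowE -colE !mxE; done.
Qed.
End Form.
Section Lat.
Variable n : nat.
Variables G C : 'M[int]_n.
Hypothesis HS : lat_symmetric_gram G.
Hypothesis HI : lat_involution G C.
Implicit Types x y z a b : 'rV[int]_n.
Local Notation "<< x , y >>" := (lat_form G x y).

Lemma rowmx_eq (A B : 'M[int]_n) : (forall x : 'rV[int]_n, x *m A = x *m B) -> A = B.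
Proof. by move=> H; apply/row_matrixP => i; rewrite !rowE H. Qed.

Lemma CC : C *m C = 1%:M. Proof. by case: HI. Qed.
Lemma iso x y : << x *m C, y *m C >> = << x, y >>. Proof. by case: HI => H _; apply: H. Qed.
Lemma xCC x : x *m C *m C = x. Proof. by rewrite -mulmxA CC mulmx1. Qed.

Lemma CGC : C *m G *m C^T = G.
Proof.
apply/matrixP => i j; rewrite -[LHS]form_entry -(form_entry G i j).
rewrite -[X in _ = X](iso (delta_mx 0 i) (delta_mx 0 j)) /lat_form.
by rewrite trmx_mul !mulmxA.
Qed.

Lemma GCt : G *m C^T = C *m G.
Proof. by rewrite -{2}CGC !mulmxA CC mul1mx. Qed.

Lemma perp a b : Lplus C a -> Lminus C b -> << a, b >> = 0.
Proof.
move=> Ha Hb; have := iso a b; rewrite Ha Hb formNr => H; lia.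
Qed.

Lemma Lplus_add a b : Lplus C a -> Lplus C b -> Lplus C (a + b).
Proof. by rewrite /Lplus mulmxDl => -> ->. Qed.
Lemma Lminus_add a b : Lminus C a -> Lminus C b -> Lminus C (a + b).
Proof. by rewrite /Lminus mulmxDl opprD => -> ->. Qed.
Lemma Lplus_opp a : Lplus C a -> Lplus C (- a).
Proof. by rewrite /Lplus mulNmx => ->. Qed.
Lemma Lminus_opp a : Lminus C a -> Lminus C (- a).
Proof. by rewrite /Lminus mulNmx => ->. Qed.
Lemma Lplus_scale k a : Lplus C a -> Lplus C (k *: a).
Proof. by rewrite /Lplus -scalemxAl => ->. Qed.
Lemma Lminus_scale k a : Lminus C a -> Lminus C (k *: a).
Proof. by rewrite /Lminus -scalemxAl => ->; rewrite scalerN. Qed.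

Lemma M0 : in_Lpm C 0.
Proof. by exists 0, 0; rewrite /Lplus /Lminus !mul0mx oppr0 addr0. Qed.
Lemma Madd x y : in_Lpm C x -> in_Lpm C y -> in_Lpm C (x + y).
Proof.
move=> [a [b [Ha [Hb ->]]]] [a' [b' [Ha' [Hb' ->]]]].
exists (a + a'), (b + b'); split; [exact: Lplus_add|split; [exact: Lminus_add|]].
by rewrite addrACA.
Qed.
Lemma Mopp x : in_Lpm C x -> in_Lpm C (- x).
Proof.
move=> [a [b [Ha [Hb ->]]]]; exists (- a), (- b); split; [exact: Lplus_opp|split; [exact: Lminus_opp|]].
by rewrite opprD.
Qed.
Lemma Msub x y : in_Lpm C x -> in_Lpm C y -> in_Lpm C (x - y).
Proof. by move=> Hx Hy; apply: Madd => //; apply: Mopp. Qed.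
Lemma Mplus a : Lplus C a -> in_Lpm C a.
Proof. by move=> Ha; exists a, 0; rewrite /Lminus mul0mx oppr0 addr0. Qed.
Lemma Mminus b : Lminus C b -> in_Lpm C b.
Proof. by move=> Hb; exists 0, b; rewrite /Lplus mul0mx add0r. Qed.
Lemma M2 y : in_Lpm C (y *+ 2).
Proof.
exists (y + y *m C), (y - y *m C); split; last split.
- by rewrite /Lplus mulmxDl xCC addrC.
- by rewrite /Lminus mulmxBl xCC opprB.
- by rewrite addrACA subrr addr0 mulr2n.
Qed.

Variable v : 'rV[int]_n.
Hypothesis Hv : Lminus C v.
Hypothesis Hvv : << v, v >> = -2.

Lemma formCv x : << x *m C, v >> = - << x, v >>.
Proof. by rewrite -iso xCC Hv formNr. Qed.

Lemma x_refl x : x *m lat_refl G v = x + << x, v >> *: v.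
Proof.
rewrite /lat_refl mulmxDr mulmx1 !mulmxA; congr (_ + _).
by rewrite [x *m G *m v^T]mx11_scalar mul_scalar_mx.
Qed.

Local Notation D := (lat_cv G C v).

Lemma xD x : x *m D = x *m C - << x, v >> *: v.
Proof.
by rewrite /lat_cv mulmxA x_refl mulmxDl -scalemxAl Hv scalerN.
Qed.

Lemma vD : v *m D = v.
Proof. rewrite xD Hv Hvv scaleNr opprK scaler_nat; by rewrite mulr2n addrA addNr add0r. Qed.

End Lat.
Section Core1.
Variable n : nat.
Variables G C : 'M[int]_n.
Hypothesis HS : lat_symmetric_gram G.
Hypothesis HI : lat_involution G C.
Implicit Types x y z a b : 'rV[int]_n.
Local Notation "<< x , y >>" := (lat_form G x y).
Variable v : 'rV[int]_n.
Hypothesis Hv : Lminus C v.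
Hypothesis Hvv : << v, v >> = -2.
Local Notation D := (lat_cv G C v).

Lemma LminusD b : Lminus D b -> Lminus C b /\ << b, v >> = 0.
Proof.
rewrite /Lminus xD // => Hb.
have H := congr1 (fun z => << z, v >>) Hb; move: H => /=.
rewrite formBl formZl formCv // Hvv formNl => H.
have Hb0 : << b, v >> = 0 by lia.
by split => //; move: Hb; rewrite Hb0 scale0r subr0.
Qed.

Lemma LplusC_D a : Lplus C a -> Lplus D a.
Proof.
move=> Ha; rewrite /Lplus xD // Ha.
by rewrite (perp HI Ha Hv) scale0r subr0.
Qed.

Lemma LplusD_even a : Lplus D a -> (2 %| << a, v >>)%Z -> in_Lpm C a.
Proof.
rewrite /Lplus xD // => Ha /dvdzP [s Hs].
have HaC : a *m C = a + << a, v >> *: v by rewrite -{2}Ha subrK.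
exists (a + s *: v), (- (s *: v)); split; last split.
- rewrite /Lplus mulmxDl HaC -scalemxAl Hv Hs scalerN.
  rewrite -addrA -scalerBl; congr (_ + _ *: _); lia.
- by apply: Lminus_opp; apply: Lminus_scale.
- by rewrite addrK.
Qed.

Hypothesis Heven : lat_even_elt G C v.

Lemma MCD x : in_Lpm C x -> in_Lpm D x.
Proof.
move=> [a [b [Ha [Hb ->]]]].
have /dvdzP [t Ht] : (2 %| << b, v >>)%Z by rewrite formC //; apply: Heven.
exists (a - t *: v), (b + t *: v); split; last split.
- apply: Lplus_add; first exact: LplusC_D.
  by rewrite /Lplus -scaleNr -scalemxAl vD.
- rewrite /Lminus xD // mulmxDl -scalemxAl Hv Hb.
  rewrite formDl formZl Hvv Ht scalerN.
  have -> : t * 2 + t * -2 = 0 by lia.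
  by rewrite scale0r subr0 opprD.
- by rewrite addrACA addNr addr0.
Qed.
End Core1.
Section Core2.
Variable n : nat.
Variables G C : 'M[int]_n.
Hypothesis HS : lat_symmetric_gram G.
Hypothesis HI : lat_involution G C.
Implicit Types x y z a b : 'rV[int]_n.
Local Notation "<< x , y >>" := (lat_form G x y).
Variable v : 'rV[int]_n.
Hypothesis Hv : Lminus C v.
Hypothesis Hvv : << v, v >> = -2.
Local Notation D := (lat_cv G C v).
Variable x0 : 'rV[int]_n.
Hypothesis Hx0 : x0 - x0 *m C = v.

Lemma x0v : << x0, v >> = -1.
Proof.
have H := congr1 (fun z => << z, v >>) Hx0; move: H => /=.
rewrite formBl formCv // Hvv => H; lia.
Qed.

Lemma x0D : Lplus D x0.
Proof.
by rewrite /Lplus xD // x0v scaleN1r opprK -Hx0 addrC subrK.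
Qed.

Lemma x0notM : ~ in_Lpm C x0.
Proof.
move=> [a [b [Ha [Hb Hab]]]].
have Hv2 : v = b + b.
  by rewrite -Hx0 Hab mulmxDl Ha Hb opprD opprK addrACA subrr add0r.
move: Hvv; rewrite Hv2 formDl !formDr // => H.
have := formC HS b b; lia.
Qed.

Lemma Dsplit y : in_Lpm D y -> in_Lpm C y \/ in_Lpm C (y - x0).
Proof.
move=> [a [b [Ha [Hb ->]]]].
have [HbC _] := LminusD HI Hv Hvv Hb.
have Hk : (2 %| << a, v >>)%Z \/ (2 %| << a - x0, v >>)%Z.
  by rewrite formBl x0v; lia.
case: Hk => Hk; [left | right].
- by apply: Madd; [apply: (LplusD_even Hv Hvv Ha Hk) | apply: Mminus].
- rewrite addrAC; apply: Madd; last by apply: Mminus.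
  apply: (LplusD_even Hv Hvv) => //.
  rewrite /Lplus mulmxBl Ha.
  by rewrite x0D.
Qed.
End Core2.
Definition F2 := 'F_2.
Definition red (m k : nat) (A : 'M[int]_(m, k)) : 'M['F_2]_(m, k) := map_mx intr A.
Definition lift (m k : nat) (A : 'M['F_2]_(m, k)) : 'M[int]_(m, k) :=
  map_mx (fun b : 'F_2 => (nat_of_ord b)%:Z) A.

Lemma red_lift m k (A : 'M['F_2]_(m, k)) : red (lift A) = A.
Proof.
apply/matrixP => i j; rewrite !mxE.
by rewrite -[X in _ = X](natr_Zp (A i j)).
Qed.

Lemma redD m k (A B : 'M[int]_(m, k)) : red (A + B) = red A + red B.
Proof. by rewrite /red map_mxD. Qed.
Lemma redN m k (A : 'M[int]_(m, k)) : red (- A) = - red A.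
Proof. by rewrite /red map_mxN. Qed.
Lemma redB m k (A B : 'M[int]_(m, k)) : red (A - B) = red A - red B.
Proof. by rewrite redD redN. Qed.
Lemma redM m k l (A : 'M[int]_(m, k)) (B : 'M[int]_(k, l)) : red (A *m B) = red A *m red B.
Proof. by rewrite /red map_mxM. Qed.
Lemma redT m k (A : 'M[int]_(m, k)) : red A^T = (red A)^T.
Proof. by rewrite /red map_trmx. Qed.
Lemma red1 k : red (1%:M : 'M[int]_k) = 1%:M.
Proof. by rewrite /red map_mx1. Qed.

Lemma intr_F2_eq0 (z : int) : ((intr z : 'F_2) == 0) = (2 %| z)%Z.
Proof. by rewrite (dvdz_pcharf (pchar_Fp (isT : prime 2))). Qed.

Lemma red_eq0 m k (A : 'M[int]_(m, k)) : red A = 0 -> exists B, A = B + B.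
Proof.
move=> H; exists (map_mx (fun z => (z %/ 2)%Z) A).
apply/matrixP => i j; rewrite !mxE.
have Hd : (2 %| A i j)%Z.
  by rewrite -intr_F2_eq0; have := congr1 (fun M : 'M['F_2]_(m, k) => M i j) H; rewrite !mxE => ->.
have := divzK Hd; lia.
Qed.

Lemma red_twice m k (B : 'M[int]_(m, k)) : red (B + B) = 0.
Proof.
apply/matrixP => i j; rewrite !mxE; apply/eqP; rewrite intr_F2_eq0; lia.
Qed.

Lemma cancel2 m k (A B : 'M[int]_(m, k)) : A + A = B + B -> A = B.
Proof.
move=> H; apply/matrixP => i j; have := congr1 (fun M : 'M[int]_(m, k) => M i j) H; rewrite !mxE; clear H; move: (A i j) (B i j) => a b; lia.
Qed.
Lemma mulmx_trT (F : fieldType) k (A : 'M[F]_(1, k)) (Y : 'M[F]_k) j :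
  (A *m Y^T) 0 j = (A *m (row j Y)^T) 0 0.
Proof. by rewrite !mxE; apply: eq_bigr => l _; rewrite !mxE. Qed.

Section FindX0.
Variable n : nat.
Variables G C : 'M[int]_n.
Hypothesis HS : lat_symmetric_gram G.
Hypothesis HU : lat_unimodular G.
Hypothesis HI : lat_involution G C.
Implicit Types x y z a b : 'rV[int]_n.
Local Notation "<< x , y >>" := (lat_form G x y).
Variable v : 'rV[int]_n.
Hypothesis Hv : Lminus C v.
Hypothesis Heven : lat_even_elt G C v.

Local Notation A := (1%:M - C).

Lemma AG : A *m G = G *m A^T.
Proof.
by rewrite linearB /= trmx1 mulmxBl mulmxBr mul1mx mulmx1 (GCt HI).
Qed.

Lemma Gb_unit : red G \in unitmx.
Proof.
rewrite unitmxE unitfE /red det_map_mx.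
by case: HU => ->; rewrite ?rmorphN rmorph1 ?oppr_eq0 oner_eq0.
Qed.

Lemma kerA_orth (yb : 'rV['F_2]_n) : yb *m red A = 0 -> red v *m red G *m yb^T = 0.
Proof.
move=> Hy; set y := lift yb.
have : red (y *m A) = 0 by rewrite redM red_lift.
move=> /red_eq0 [w Hw].
have HyC : y *m C = y - (w + w) by rewrite -Hw mulmxBr mulmx1 opprB addrC subrK.
have HwC : Lminus C w.
  apply: cancel2; rewrite /Lminus -mulmxDl -opprD -Hw -mulmxA mulmxBl mul1mx (CC HI).
  by rewrite !mulmxBr !mulmx1 opprB.
have Hp : Lplus C (y - w).
  rewrite /Lplus mulmxBl HwC HyC opprK opprD.
  by rewrite -!addrA; congr (_ + _); rewrite addNr addr0.
have Hvy : (2 %| << v, y >>)%Z.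
  have -> : y = (y - w) + w by rewrite subrK.
  rewrite formDr formC // (perp HI Hp Hv) add0r; exact: Heven.
rewrite -[yb]red_lift -redT -!redM.
apply/matrixP => i j; rewrite !ord1 /red [LHS]mxE [RHS]mxE; apply/eqP.
by rewrite intr_F2_eq0.
Qed.

Lemma red_v_sub : (red v <= red A)%MS.
Proof.
rewrite submxE; apply/eqP.
set Z := cokermx (red A).
have HZ : red A *m Z = 0 by exact: mulmx_coker.
set Y := (invmx (red G) *m Z)^T.
have HZY : Z = red G *m Y^T.
  by rewrite /Y trmxK mulmxA mulmxV ?mul1mx //; exact: Gb_unit.
have HAG : red A *m red G = red G *m (red A)^T by rewrite -redT -!redM AG.
have HYA : Y *m red A = 0.
  apply: trmx_inj; rewrite trmx_mul trmx0.
  have : red G *m ((red A)^T *m Y^T) = 0 by rewrite mulmxA -HAG -mulmxA -HZY.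
  move=> H; have := congr1 (mulmx (invmx (red G))) H.
  by rewrite mulmx0 mulKmx //; exact: Gb_unit.
rewrite HZY mulmxA; apply/matrixP => i j; rewrite ord1 mulmx_trT.
rewrite kerA_orth ?mxE //.
by rewrite -row_mul HYA row0.
Qed.

Lemma find_x0 : exists x0, x0 - x0 *m C = v.
Proof.
have /submxP [X HX] := red_v_sub.
set x1 := lift X.
have : red (x1 *m A - v) = 0 by rewrite redB redM red_lift -HX subrr.
move=> /red_eq0 [z Hz].
have HzC : Lminus C z.
  apply: cancel2; rewrite /Lminus -mulmxDl -opprD -Hz mulmxBl Hv -mulmxA mulmxBl mul1mx (CC HI).
  by rewrite !mulmxBr !mulmx1 opprB opprK opprB [RHS]addrC.
have Hx1 : x1 - x1 *m C = (z + z) + v by rewrite -Hz subrK mulmxBr mulmx1.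
exists (x1 - z).
rewrite mulmxBl HzC opprK.
have -> : x1 - z - (x1 *m C + z) = (x1 - x1 *m C) - (z + z).
  by rewrite !opprD !addrA; congr (_ + _); rewrite addrAC.
by rewrite Hx1 addrC addKr.
Qed.
End FindX0.
Lemma card_seq_set (U : finType) (s : seq U) : #|[set x in s]| = size (undup s).
Proof.
rewrite cardsE -(eq_card (mem_undup s)); exact/card_uniqP/undup_uniq.
Qed.

Lemma undup_kernel (T U1 U2 : eqType) (h1 : T -> U1) (h2 : T -> U2) (s : seq T) :
  (forall a b, h1 a = h1 b <-> h2 a = h2 b) ->
  size (undup (map h1 s)) = size (undup (map h2 s)).
Proof.
move=> Hk; elim: s => //= a s IH.
have -> : (h1 a \in map h1 s) = (h2 a \in map h2 s).
  apply/mapP/mapP => [[b Hb E]|[b Hb E]]; exists b => //; exact/Hk.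
by case: ifP => _ //=; rewrite IH.
Qed.

Lemma zsub3 (V : zmodType) (a b c : V) : (a - c) - (a - b) = b - c.
Proof. by rewrite opprB addrC addrA subrK. Qed.

Section FinCount.
Variable T : finZmodType.
Variable K : {set T}.
Hypothesis HK0 : 0 \in K.
Hypothesis HKsub : forall a b, a \in K -> b \in K -> a - b \in K.

Definition hK (a : T) : {set T} := [set b | a - b \in K].

Lemma hK_eq a b : (hK a == hK b) = (a - b \in K).
Proof.
apply/eqP/idP => [E|H].
- have : b \in hK b by rewrite inE subrr.
  by rewrite -E inE.
- apply/setP => c; rewrite !inE; apply/idP/idP => Hc.
  + rewrite -(zsub3 a b c).
    exact: HKsub.
  + rewrite -(zsub3 b a c).
    apply: HKsub => //; have -> : b - a = 0 - (a - b) by rewrite sub0r opprB.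
    exact: HKsub.
Qed.

Lemma count_fin : (size (undup (map hK (enum T))) * #|K|)%N = #|T|.
Proof.
have -> : size (undup (map hK (enum T))) = #|[set hK x | x in T]|.
  rewrite -card_seq_set; apply: eq_card => A; rewrite !inE.
  by apply/mapP/imsetP => [[x _ ->]|[x _ ->]]; exists x => //; rewrite mem_enum.
rewrite -[RHS]sum1_card (partition_big_imset hK) /=.
rewrite (eq_bigr (fun _ => #|K|)) ?sum_nat_const //.
move=> A /imsetP [a0 _ ->].
rewrite sum1_card.
have -> : #|[pred a | (a \in T) && (hK a == hK a0)]| = #|[set a0 - k | k in K]|.
  apply: eq_card => a; rewrite !inE /=.
  rewrite hK_eq; apply/idP/imsetP => [H|[k Hk ->]].
  - exists (a0 - a); last by rewrite opprB addrC subrK.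
    have -> : a0 - a = 0 - (a - a0) by rewrite sub0r opprB.
    exact: HKsub.
  - have -> : a0 - k - a0 = 0 - k by rewrite addrC addKr sub0r.
    exact: HKsub.
rewrite card_imset //; move=> k1 k2 /addrI; exact: oppr_inj.
Qed.
End FinCount.
Local Open Scope classical_set_scope.
Definition cosP n (P : 'rV[int]_n -> Prop) (x : 'rV[int]_n) : set 'rV[int]_n :=
  [set y | P (x - y)].
Definition cosetsP n (P : 'rV[int]_n -> Prop) : set (set 'rV[int]_n) :=
  [set cosP P x | x in [set: 'rV[int]_n]].
Local Close Scope classical_set_scope.

Lemma cosets_LpmE n (C : 'M[int]_n) : cosets_Lpm C = cosetsP (in_Lpm C).
Proof. by []. Qed.

Definition QP n (P : 'rV[int]_n -> Prop) : {set 'rV['F_2]_n} := [set a | `[< P (lift a) >]].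

Section CountCosets.
Variable n : nat.
Variable P : 'rV[int]_n -> Prop.
Hypothesis HP0 : P 0.
Hypothesis HPsub : forall x y, P x -> P y -> P (x - y).
Hypothesis HP2 : forall x, red x = 0 -> P x.

Lemma Presp u w : P u -> red u = red w -> P w.
Proof.
move=> Hu Hr; have -> : w = u - (u - w) by rewrite opprB addrC subrK.
by apply: HPsub => //; apply: HP2; rewrite redB Hr subrr.
Qed.

Lemma inQP a : (a \in QP P) <-> P (lift a).
Proof. by rewrite inE; split => [/asboolP|?]; last apply/asboolP. Qed.

Lemma Plift a b : P (lift (a - b)) <-> P (lift a - lift b).
Proof.
by split => H; apply: (Presp H); rewrite redB !red_lift.
Qed.

Lemma count_cosets : (#|` fset_set (cosetsP P)| * #|QP P|)%N = #|'rV['F_2]_n|.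
Proof.
set T := 'rV['F_2]_n.
pose h (a : T) := cosP P (lift a).
have Q0 : (0 : T) \in QP P.
  by apply/inQP; apply: (Presp HP0); rewrite red_lift /red map_mx0.
have Qsub : forall a b, a \in QP P -> b \in QP P -> a - b \in QP P.
  move=> a b /inQP Ha /inQP Hb; apply/inQP/Plift; exact: HPsub.
rewrite -(count_fin Q0 Qsub).
have -> : cosetsP P = ([set` [fset x in map h (enum T)]%fset])%classic.
  apply/seteqP; split => X /=.
  - move=> [x _ <-]; rewrite inE; apply/mapP; exists (red x); first by rewrite mem_enum.
    apply/seteqP; split => y /= Hy; apply: (Presp Hy); by rewrite !redB red_lift.
  - rewrite inE => /mapP [a _ ->]; by exists (lift a).
rewrite set_fsetK card_fseq; congr (_ * _)%N.
apply: undup_kernel => a b; split => [E|/eqP].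
- apply/eqP; rewrite (hK_eq Q0 Qsub); apply/inQP/Plift.
  have Hb : h b (lift b) by rewrite /h /cosP /= subrr.
  by rewrite -E in Hb.
- rewrite (hK_eq Q0 Qsub) => /inQP/Plift H.
  apply/seteqP; split => y; rewrite /h /cosP /= => Hy.
  + rewrite -(zsub3 (lift a) (lift b) y); exact: HPsub.
  + rewrite -(zsub3 (lift b) (lift a) y); apply: HPsub => //.
    have -> : lift b - lift a = 0 - (lift a - lift b) by rewrite sub0r opprB.
    exact: HPsub.
Qed.
End CountCosets.
Section DInv.
Variable n : nat.
Variables G C : 'M[int]_n.
Hypothesis HS : lat_symmetric_gram G.
Hypothesis HI : lat_involution G C.
Implicit Types x y z a b : 'rV[int]_n.
Local Notation "<< x , y >>" := (lat_form G x y).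
Variable v : 'rV[int]_n.
Hypothesis Hv : Lminus C v.
Hypothesis Hvv : << v, v >> = -2.
Local Notation D := (lat_cv G C v).

Lemma D_inv : lat_involution G D.
Proof.
split.
- move=> x y; rewrite !xD // formBl !formBr // !formZl !formZr //.
  rewrite (iso HI) (formCv HI Hv) (formC HS v (y *m C)) (formCv HI Hv) Hvv.
  lia.
- apply: rowmx_eq => x; rewrite mulmxA mulmx1 [x *m D]xD // mulmxBl -scalemxAl (vD Hv Hvv).
  by rewrite xD // (xCC HI) (formCv HI Hv) scaleNr opprK addrK.
Qed.
End DInv.

Lemma M_hyps n (G C : 'M[int]_n) : lat_involution G C ->
  [/\ in_Lpm C 0, (forall x y, in_Lpm C x -> in_Lpm C y -> in_Lpm C (x - y))
    & (forall x, red x = 0 -> in_Lpm C x)].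
Proof.
move=> HI; split; first exact: M0.
- move=> x y; exact: Msub.
- move=> x /red_eq0 [B ->]; rewrite -mulr2n; exact: (M2 HI).
Qed.

Lemma logn2_double m : (0 < m)%N -> logn 2 (2 * m) = (logn 2 m).+1.
Proof. by move=> Hm; rewrite lognM // lognE. Qed.
Lemma core n (G C : 'M[int]_n) (v : 'rV[int]_n) :
  lat_symmetric_gram G -> lat_unimodular G -> lat_involution G C ->
  Lminus C v -> lat_form G v v = -2 -> lat_even_elt G C v ->
  (lat_dc (lat_cv G C v)).+1 = lat_dc C.
Proof.
move=> HS HU HI Hv Hvv Heven.
set D := lat_cv G C v.
have HID : lat_involution G D by exact: D_inv.
have [x0 Hx0] := find_x0 HS HU HI Hv Heven.
have [C0 Csub C2] := M_hyps HI.
have [D0 Dsub D2] := M_hyps HID.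
have cntC := count_cosets C0 Csub C2.
have cntD := count_cosets D0 Dsub D2.
rewrite -cosets_LpmE in cntC cntD.
set KC := QP (in_Lpm C) in cntC.
set KD := QP (in_Lpm D) in cntD.
set cC := #|` fset_set (cosets_Lpm C)|%N in cntC.
set cD := #|` fset_set (cosets_Lpm D)|%N in cntD.
have PC := Presp Csub C2.
have PD := Presp Dsub D2.
set x0b := red x0.
have HKD : KD = KC :|: [set x0b + k | k in KC].
  apply/setP => a; rewrite finset.in_setU; apply/idP/orP.
  - move=> /inQP /(Dsplit HI Hv Hvv Hx0) [H|H]; [left; exact/inQP|right].
    apply/imsetP; exists (a - x0b); last by rewrite addrC subrK.
    apply/inQP; apply: (PC _ _ H); by rewrite redB !red_lift.
  - case=> [/inQP H|/imsetP [k /inQP Hk ->]]; apply/inQP.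
    + exact: (MCD HS HI Hv Hvv Heven).
    + apply: (PD (x0 + lift k)); last by rewrite redD !red_lift.
      apply: Madd; first exact/Mplus/(x0D HI Hv Hvv Hx0).
      exact: (MCD HS HI Hv Hvv Heven).
have Hdisj : KC :&: [set x0b + k | k in KC] = finset.set0.
  apply/setP => a; rewrite finset.in_setI finset.in_set0; apply/negP => /andP [/inQP Ha /imsetP [k /inQP Hk Ea]].
  apply: (x0notM HS Hvv Hx0).
  apply: (PC _ _ (Csub _ _ Ha Hk)).
  by rewrite redB !red_lift Ea addrK.
have cardKD : #|KD| = (2 * #|KC|)%N.
  rewrite HKD cardsU Hdisj cards0 subn0 card_imset; last exact: addrI.
  by rewrite addnn -muln2 mulnC.
have KC0 : (0 < #|KC|)%N.
  apply/card_gt0P; exists 0; apply/inQP; apply: (PC 0) => //.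
  by rewrite red_lift /red map_mx0.
have T0 : (0 < #|'rV['F_2]_n|)%N by apply/card_gt0P; exists 0.
have HcC : cC = (2 * cD)%N.
  apply/eqP; by rewrite -(eqn_pmul2r KC0) cntC -mulnA [(cD * _)%N]mulnC mulnA -cardKD mulnC cntD.
have cD0 : (0 < cD)%N.
  by move: T0; rewrite -cntD muln_gt0 => /andP [].
by rewrite /lat_dc -/cC -/cD HcC logn2_double.
Qed.
Lemma sq_par (a : int) : (2 %| a * a - a)%Z.
Proof.
have Hm := modz_ge0 a (isT : (2 != 0 :> int)).
have Hl := ltz_pmod a (isT : (0 < 2 :> int)).
have Ha := divz_eq a 2.
set q := (a %/ 2)%Z in Ha; set r := (a %% 2)%Z in Ha Hm Hl.
have : r = 0 \/ r = 1 by lia.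
case=> Hr; rewrite Hr in Ha; apply/dvdzP.
- by exists (q * q * 2 - q); rewrite Ha; ring.
- by exists (q * q * 2 + q); rewrite Ha; ring.
Qed.

Lemma odd_mul (k o m : int) : k * o = m * 2 -> ~~ (2 %| o)%Z -> (2 %| k)%Z.
Proof.
move=> H Ho.
have Hm := modz_ge0 o (isT : (2 != 0 :> int)).
have Hl := ltz_pmod o (isT : (0 < 2 :> int)).
have Ha := divz_eq o 2.
have Hr : (o %% 2)%Z = 1.
  have : (o %% 2)%Z != 0 by apply/eqP => H0; move/negP: Ho; apply; apply/dvdz_mod0P.
  move: Hm Hl; move: (o %% 2)%Z => r; lia.
rewrite Hr in Ha; set q := (o %/ 2)%Z in Ha.
apply/dvdzP; exists (m - k * q).
rewrite Ha in H; nia.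
Qed.

Lemma even_sq (a : int) : (2 %| a * a)%Z -> (2 %| a)%Z.
Proof.
move=> /dvdzP [m Hm]; apply/negPn/negP => Ha.
by move: (odd_mul Hm Ha); rewrite (negbTE Ha).
Qed.

Lemma in_Lpm_opp n (X : 'M[int]_n) : in_Lpm (- X) = in_Lpm X.
Proof.
apply: funext => x; apply: propext; split => [[a [b [Ha [Hb ->]]]]|[a [b [Ha [Hb ->]]]]];
  exists b, a; (split; last split); try by rewrite addrC.
- by move: Hb; rewrite /Lminus /Lplus mulmxN => /oppr_inj.
- by move: Ha; rewrite /Lminus /Lplus mulmxN => /eqP; rewrite eqr_oppLR => /eqP.
- by rewrite /Lplus mulmxN Hb opprK.
- by rewrite /Lminus mulmxN Ha.
Qed.

Lemma lat_dc_opp n (X : 'M[int]_n) : lat_dc (- X) = lat_dc X.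
Proof. by rewrite /lat_dc !cosets_LpmE in_Lpm_opp. Qed.
Lemma RR n (G : 'M[int]_n) (v : 'rV[int]_n) : lat_form G v v = -2 ->
  lat_refl G v *m lat_refl G v = 1%:M.
Proof.
move=> Hvv; apply: rowmx_eq => x; rewrite mulmxA !x_refl mulmx1.
rewrite formDl formZl Hvv -addrA -scalerDl.
have -> : lat_form G x v + (lat_form G x v + lat_form G x v * -2) = 0 by ring.
by rewrite scale0r addr0.
Qed.

Lemma cvN n (G C : 'M[int]_n) (v : 'rV[int]_n) : lat_form G v v = -2 ->
  lat_cv G (- lat_cv G C v) v = - C.
Proof. by move=> Hvv; rewrite /lat_cv mulmxN mulmxA RR // mul1mx. Qed.

Unset Implicit Arguments.
Set Strict Implicit.

Theorem proposition3p1 (n : nat) (G C : 'M[int]_n) (v : 'rV[int]_n) :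
  lat_symmetric_gram G -> lat_unimodular G ->
  (lat_odd_lattice G -> exists w, lat_characteristic G w /\ (Lplus C w \/ Lminus C w)) ->
  lat_involution G C ->
  Lminus C v -> lat_form G v v = -2 ->
  [/\ (lat_odd_elt G C v -> lat_dc (lat_cv G C v) = (lat_dc C).+1),
      (lat_even_elt G C v -> (lat_dc (lat_cv G C v)).+1 = lat_dc C),
      (lat_wu_element G C v <-> lat_even_involution G (lat_cv G C v))
    & (lat_even_involution G (lat_cv G C v) -> (lat_dc (lat_cv G C v)).+1 = lat_dc C)]%N.
Proof.
move=> HS HU _ HI Hv Hvv.
set D := lat_cv G C v.
have HID : lat_involution G D := D_inv HS HI Hv Hvv.
have part2 : lat_even_elt G C v -> (lat_dc D).+1 = lat_dc C := core HS HU HI Hv Hvv.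
have formD : forall x, lat_form G x (x *m D) =
    lat_form G x (x *m C) - lat_form G x v * lat_form G x v.
  by move=> x; rewrite xD // formBr formZr.
have part3 : lat_wu_element G C v <-> lat_even_involution G D.
  split.
  - move=> [_ [_ Hc]] x; rewrite formD.
    have := Hc x; have := sq_par (lat_form G x v).
    move: (lat_form G x v * lat_form G x v) => s.
    move: (lat_form G x v) (lat_form G x x) (lat_form G x (x *m C)) => a p q; lia.
  - move=> He; split => //; split.
    + move=> l Hl; rewrite formC //; apply: even_sq.
      have := He l; rewrite formD Hl formNr.
      move: (lat_form G l v * lat_form G l v) => s.
      move: (lat_form G l l) => p; lia.
    + move=> x; have := He x; rewrite formD; have := sq_par (lat_form G x v).
      move: (lat_form G x v * lat_form G x v) => s.
      move: (lat_form G x v) (lat_form G x x) (lat_form G x (x *m C)) => a p q; lia.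
split.
- move=> [l0 [Hl0 Hodd]].
  set C2 := - D.
  have HI2 : lat_involution G C2.
    split.
    + move=> x y; rewrite /C2 !mulmxN formNl formNr opprK.
      by case: HID => Hiso _; apply: Hiso.
    + by rewrite /C2 mulmxN mulNmx opprK; case: HID.
  have Hv2 : Lminus C2 v by rewrite /Lminus /C2 mulmxN vD.
  have Heven2 : lat_even_elt G C2 v.
    move=> l; rewrite /Lminus /C2 mulmxN => /oppr_inj HlD.
    rewrite formC //.
    have HlC : l *m C = l + lat_form G l v *: v by move: HlD; rewrite xD // => /eqP; rewrite subr_eq => /eqP.
    have E := iso HI l l0; rewrite HlC Hl0 formDl formZl !formNr mulrN in E.
    apply: (@odd_mul _ (lat_form G v l0) (- lat_form G l l0)) => //.
    move: E; move: (lat_form G l v * lat_form G v l0) => s; lia.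
  have := core HS HU HI2 Hv2 Hvv Heven2.
  by rewrite /C2 cvN // !lat_dc_opp => <-.
- exact: part2.
- exact: part3.
- by move=> /part3 [_ [He _]]; apply: part2.
Qed.
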